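(* Let $r\geq 3$, let $X$ be a finite set of cardinality $n\geq 1$, and let $A_1,\dots,A_r\subseteq X$. For $k\in\{1,\dots,r\}$ put $$S_k=\sum_{1\leq i_1<\dots<i_k\leq r}\left|A_{i_1}\cap\dots\cap A_{i_k}\right|.$$ Then for every $1\leq k\leq r$, $$S_k\geq\binom{\lfloor S_1/n\rfloor}{k-1}\left(S_1-\frac{k-1}{k}\left(\lfloor S_1/n\rfloor+1\right)n\right).$$ *)

(* Defs.v *)
From mathcomp Require Import all_boot all_order all_algebra.
Set Implicit Arguments. Unset Strict Implicit. Unset Printing Implicit Defensive.

Definition Sk (T : finType) (r : nat) (A : 'I_r -> {set T}) (k : nat) : nat :=
  \sum_(I : {set 'I_r} | #|I| == k) #|\bigcap_(i in I) A i|.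

(* Main.v *)
Require Import Defs.
From mathcomp Require Import all_boot all_order all_algebra.
Import Order.TTheory GRing.Theory Num.Theory.

Lemma Sk_count (T : finType) (r : nat) (A : 'I_r -> {set T}) (k : nat) :
  Sk A k = \sum_(x : T) 'C(#|[set i | x \in A i]|, k).
Proof.
rewrite /Sk.
transitivity (\sum_(I : {set 'I_r} | #|I| == k) \sum_(x : T) (x \in \bigcap_(i in I) A i : nat)).
  by apply: eq_bigr => I _; rewrite -sum1_card big_mkcond.
rewrite exchange_big /=; apply: eq_bigr => x _.
rewrite -cards_draws -sum1_card big_mkcond /= [RHS]big_mkcond /=.
apply: eq_bigr => I _; rewrite inE.
have -> : (x \in \bigcap_(i in I) A i) = (I \subset [set i | x \in A i]).
  apply/bigcapP/subsetP => H i Hi; first by rewrite inE; apply: H.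
  by have := H i Hi; rewrite inE.
by case: (I \subset _); case: (#|I| == k).
Qed.

From mathcomp Require Import zify ring lra.
Lemma sec_up (k m d : nat) : (m <= d)%N -> ('C(m, k.+1) + (d - m) * 'C(m, k) <= 'C(d, k.+1))%N.
Proof.
move=> H; have [j ->] : exists j, d = (j + m)%N by exists (d - m)%N; rewrite subnK.
rewrite addnK; elim: j => [|j IH]; first by rewrite add0n mul0n addn0.
rewrite addSn binS mulSn; have h1 := leq_bin2l k (leq_addl j m); set a := (j * _)%N in IH h1 *; lia.
Qed.

Lemma sec_down (k m d : nat) : (d <= m)%N -> ('C(m, k.+1) <= 'C(d, k.+1) + (m - d) * 'C(m, k))%N.
Proof.
move=> H.
have G : forall j, (j + d <= m)%N -> ('C(j + d, k.+1) <= 'C(d, k.+1) + j * 'C(m, k))%N.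
  elim => [|j IH] Hj; first by rewrite add0n mul0n addn0.
  rewrite addSn binS mulSn; rewrite addSn in Hj; have h1 := IH (ltnW Hj); have h2 := leq_bin2l k (ltnW Hj); set a := (j * _)%N in h1 h2 *; lia.
by have := G (m - d)%N; rewrite subnK //; apply.
Qed.

Local Open Scope ring_scope.
Lemma pointwise (k m d : nat) :
  (('C(d, k.+1))%:R : rat) >= ('C(m, k))%:R * (d%:R - k%:R / k.+1%:R * m.+1%:R).
Proof.
have sec : (('C(d, k.+1))%:R : rat) >= ('C(m, k.+1))%:R + ('C(m, k))%:R * (d%:R - m%:R).
  case: (leqP m d) => Hmd.
    have := sec_up k m d Hmd; rewrite -(ler_nat rat) natrD natrM natrB //.
    by rewrite mulrC.
  have := sec_down k m d (ltnW Hmd); rewrite -(ler_nat rat) natrD natrM natrB ?(ltnW Hmd) //.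
  move=> h; nra.
case: (leqP k m) => Hkm; last first.
  by rewrite bin_small // mul0r.
apply: le_trans sec.
have E := mul_bin_left m k; move/(congr1 (fun n => (n%:R : rat))): E.
rewrite !natrM natrB // => E.
have Hk : (k.+1%:R : rat) != 0 by rewrite pnatr_eq0.
have -> : (('C(m, k.+1))%:R : rat) = (m%:R - k%:R) * ('C(m,k))%:R / k.+1%:R.
  by rewrite -E [_ * (_%:R)]mulrC mulfK.
rewrite le_eqVlt; apply/orP; left; apply/eqP.
field.
by rewrite nat1r.
Qed.

Theorem theorem3 (T : finType) (r : nat) (A : 'I_r -> {set T}) (k : nat) :
  (3 <= r)%N -> (1 <= #|T|)%N -> (1 <= k <= r)%N ->
  ((Sk A k)%:R : rat) >=
    ('C((Sk A 1) %/ #|T|, k.-1))%:R *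
    ((Sk A 1)%:R - (k.-1)%:R / k%:R * ((Sk A 1) %/ #|T|).+1%:R * (#|T|)%:R).
Proof.
move=> _ _ /andP [k1 _].
set M := (Sk A 1 %/ #|T|)%N.
case: k k1 => [//|k] _ /=.
rewrite [X in _ <= X%:R]Sk_count.
have S1 : ((Sk A 1)%:R : rat) = \sum_(x : T) (#|[set i | x \in A i]|)%:R.
  by rewrite Sk_count natr_sum; apply: eq_bigr => x _; rewrite bin1.
have N : ((#|T|)%:R : rat) = \sum_(x : T) 1.
  by rewrite -sum1_card natr_sum.
rewrite S1 N mulr_sumr -sumrB mulr_sumr natr_sum.
apply: ler_sum => x _.
rewrite mulr1.
exact: pointwise.
Qed.
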